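(* Let $(\Omega,\mathcal{H},\mathbb{P})$ be a probability space with a filtration $\mathbb{U}=(\mathcal{U}_t)_{t\ge0}$, and let $(D_t)_{t\ge0}$ be a continuous $\mathbb{U}$-adapted real process (the income of an energy-efficient building) such that all conditional expectations below are well defined and finite. Let $R>0$, $\bar r>0$, $\alpha>\alpha^\star>0$, let $\mathfrak{c}:(\mathbb{R}_+)^2\to\mathbb{R}_+^*$ be continuous, let $\mathfrak{p}$ be a fixed energy source and $\mathfrak{f}(\cdot,\mathfrak{p}):\mathbb{R}_+\to\mathbb{R}_+^*$ differentiable, and let $\delta:\mathbb{R}_+\to\mathbb{R}_+$ be a deterministic $\mathcal{C}^1$ function for which there exist $0\le t_\circ<t_\star$ with $\delta$ constant on $[0,t_\circ]$ and constant on $[t_\star,\infty)$. Define $$C_t:=R\,\mathbb{E}\Big[\int_t^{\infty}e^{-\bar r(u-t)}D_u\,\mathrm{d}u\,\Big|\,\mathcal{U}_t\Big],$$ $$\mathcal{C}_{t,\delta}:=R\operatorname*{ess\,sup}_{\theta\ge t}\mathbb{E}\Big[\int_t^{\theta}\big[D_u-(\alpha-\alpha^\star)\mathfrak{f}(\delta_u,\mathfrak{p})\big]e^{-\bar r(u-t)}\mathrm{d}u-\mathfrak{c}(\alpha,\alpha^\star)e^{-\bar r(\theta-t)}+\int_\theta^\infty e^{-\bar r(u-t)}D_u\,\mathrm{d}u\,\Big|\,\mathcal{U}_t\Big],$$ the essential supremum being over (deterministic) times $\theta\in[t,\infty)$. Assume that (1) $\delta$ is non-decreasing on $\mathbb{R}_+$,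 and (2) $\mathfrak{f}(\cdot,\mathfrak{p})$ is non-decreasing on $\mathbb{R}_+$. Then for every $t\ge0$, $$\mathcal{C}_{t,\delta}=C_t-R\,X_{t,\delta},\qquad X_{t,\delta}:=\mathfrak{c}(\alpha,\alpha^\star)e^{-\bar r(\mathfrak{t}-t)}+(\alpha-\alpha^\star)\int_t^{\mathfrak{t}}\mathfrak{f}(\delta_u,\mathfrak{p})e^{-\bar r(u-t)}\,\mathrm{d}u,$$ where the optimal renovation date $\mathfrak{t}\in[t,+\infty]$ is given by: $\mathfrak{t}=t$ if $\mathfrak{f}(\delta_\theta,\mathfrak{p})-\bar r\frac{\mathfrak{c}(\alpha,\alpha^\star)}{\alpha-\alpha^\star}>0$ for all $\theta\in[t,\infty)$; $\mathfrak{t}=+\infty$ if $\mathfrak{f}(\delta_\theta,\mathfrak{p})-\bar r\frac{\mathfrak{c}(\alpha,\alpha^\star)}{\alpha-\alpha^\star}<0$ for all $\theta\in[t,\infty)$; and $\mathfrak{t}=\theta^\star$ where $\theta^\star$ is the unique solution in $[t,\infty)$ of $\mathfrak{f}(\delta_\theta,\mathfrak{p})=\bar r\frac{\mathfrak{c}(\alpha,\alpha^\star)}{\alpha-\alpha^\star}$ (when such a unique solution exists). For $\mathfrak{t}=+\infty$, $e^{-\bar r(\mathfrak{t}-t)}:=0$ and the integral is over $[t,\infty)$.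
   Context: $\delta_t$ is the (deterministic) carbon price at time $t$, $\mathfrak{f}(\delta,\mathfrak{p})$ the energy price of source $\mathfrak{p}$ at carbon price $\delta$, $\alpha$ and $\alpha^\star$ the energy consumption per square meter of the building and of an efficient building, $\mathfrak{c}(\alpha,\alpha^\star)$ the renovation cost, $R$ the surface and $\bar r$ the discount rate. *)

(* Defs.v *)
From HB Require Import structures.
From mathcomp Require Import all_boot all_order all_algebra.
From mathcomp Require Import all_classical all_reals all_analysis.
Set Implicit Arguments.
Unset Strict Implicit.
Unset Printing Implicit Defensive.
Import Order.TTheory GRing.Theory Num.Theory.
Import numFieldNormedType.Exports.
Local Open Scope classical_set_scope.
Local Open Scope ring_scope.

Section Defs.
Context {R : realType}.

Definition Gmeasurable {T : Type} (G : set (set T)) (f : T -> R) : Prop :=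
  forall B : set R, measurable B -> G (f @^-1` B).

Definition is_filtration {d} {T : measurableType d} (U : R -> set (set T)) :=
  (forall s, 0 <= s -> sigma_algebra setT (U s)) /\
  (forall s, 0 <= s -> U s `<=` measurable) /\
  (forall s u, 0 <= s -> s <= u -> U s `<=` U u).

Definition is_cond_exp {d} {T : measurableType d} (P : probability T R)
    (G : set (set T)) (X Y : T -> R) : Prop :=
  Gmeasurable G Y /\ P.-integrable setT (EFin \o Y) /\
  forall A, G A -> (\int[P]_(x in A) (Y x)%:E = \int[P]_(x in A) (X x)%:E)%E.

Definition is_ess_sup {d} {T : measurableType d} (P : probability T R)
    (I : set R) (F : R -> T -> R) (Z : T -> R) : Prop :=
  measurable_fun setT Z /\
  (forall i, I i -> {ae P, forall w, F i w <= Z w}) /\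
  (forall W : T -> R, measurable_fun setT W ->
     (forall i, I i -> {ae P, forall w, F i w <= W w}) ->
     {ae P, forall w, Z w <= W w}).

Definition rdiff_quot (f : R -> R) (x : R) := fun h : R => h^-1 * (f (x + h) - f x).
Definition rderivable (f : R -> R) (x : R) : Prop := cvg (rdiff_quot f x @ 0^'+).
Definition rderive (f : R -> R) (x : R) : R := lim (rdiff_quot f x @ 0^'+).

Definition differentiable_Rplus (f : R -> R) : Prop :=
  (forall x, 0 < x -> derivable f x 1) /\ rderivable f 0.
Definition deriv_Rplus (f : R -> R) (x : R) : R :=
  if x == 0 then rderive f 0 else derive1 f x.
Definition C1_Rplus (f : R -> R) : Prop :=
  differentiable_Rplus f /\ {within `[0, +oo[, continuous (deriv_Rplus f)}.

Definition opt_date (f delta : R -> R) (rbar c alpha alphas t : R)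
    (T : \bar R) : Prop :=
  let k := rbar * c / (alpha - alphas) in
  (T = t%:E /\ forall th, t <= th -> 0 < f (delta th) - k) \/
  (T = +oo%E /\ forall th, t <= th -> f (delta th) - k < 0) \/
  (exists ths, T = ths%:E /\ t <= ths /\ f (delta ths) = k /\
     forall th, t <= th -> f (delta th) = k -> th = ths).

Definition Xcost (f delta : R -> R) (rbar c alpha alphas t : R)
    (T : \bar R) : R :=
  match T with
  | x%:E => c * expR (- rbar * (x - t)) + (alpha - alphas) *
      \int[lebesgue_measure]_(u in `[t, x]) (f (delta u) * expR (- rbar * (u - t)))
  | +oo%E => (alpha - alphas) *
      \int[lebesgue_measure]_(u in `[t, +oo[) (f (delta u) * expR (- rbar * (u - t)))
  | -oo%E => 0
  end.

End Defs.

(* Main.v *)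
Require Import Defs.
From HB Require Import structures.
From mathcomp Require Import all_boot all_order all_algebra.
From mathcomp Require Import all_classical all_reals all_analysis.
From mathcomp Require Import ring lra.
From mathcomp Require Import measurable_realfun.
Import Order.TTheory GRing.Theory Num.Theory.
Import numFieldNormedType.Exports.
Local Open Scope classical_set_scope.
Local Open Scope ring_scope.
Section S.
Context {R : realType}.
Notation lam := (@lebesgue_measure R).
Variables (r t : R).
Hypothesis r0 : 0 < r.
Let E := fun u : R => expR (- r * (u - t)).

Lemma cE : continuous E.
Proof.
move=> z; apply: continuous_comp; last exact: continuous_expR.
apply: continuousM; first exact: cst_continuous.
apply: continuousB; [by move=> ?; exact: cvg_id| exact: cst_continuous].
Qed.

Lemma EE u : E u = expR (r * t) * expR (- r * u).
Proof. by rewrite /E -expRD; congr expR; ring. Qed.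

Let G := fun x => - (expR (r * t) / r) * expR (- r * x).
Lemma dE z : G^`()%classic z = E z.
Proof.
rewrite /G.
rewrite derive1Ml//.
rewrite (_ : (fun x => expR (- r * x)) = expR \o (fun x => - r * x)) //.
rewrite derive1_comp// derive1E.
have /funeqP -> := @derive_expR R.
rewrite derive1Ml// derive1_id mulr1 EE.
by field; rewrite gt_eqF.
Qed.

Lemma cG : continuous G.
Proof.
rewrite /G => z; apply: (@continuousM _ _ (cst (- (expR (r * t) / r))) (fun x => expR (- r * x))); first exact: cst_continuous.
apply: continuous_comp; last exact: continuous_expR.
apply: continuousM; first exact: cst_continuous.
by move=> ?; exact: cvg_id.
Qed.

Lemma GE a : G a = - (E a / r).
Proof. by rewrite /G EE; field; rewrite gt_eqF. Qed.

Lemma intE_full a : (\int[lam]_(x in `[a, +oo[) (E x)%:E = (E a / r)%:E)%E.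
Proof.
rewrite (@ge0_continuous_FTC2y _ E G a 0).
- by rewrite GE EFinN sub0e oppeK.
- by move=> x _; exact: expR_ge0.
- by apply: continuous_subspaceT; exact: cE.
- rewrite -(mulr0 (- (expR (r * t) / r))).
  apply: cvgM; first exact: cvg_cst.
  rewrite (_ : (fun x => expR (- r * x)) =
               (fun z => expR (- z)) \o (fun z => r * z)); last first.
    by apply: eq_fun => x; rewrite mulNr.
  apply: (@cvg_comp _ _ _ _ _ _ (pinfty_nbhs R)); last exact: cvgr_expR.
  exact: gt0_cvgMry.
- by move=> x _; rewrite /G; exact: ex_derive.
- by apply/cvg_at_right_filter; exact: cG.
- by move=> x _; rewrite dE.
Qed.

Lemma mE (A : set R) : measurable_fun A E.
Proof. exact: measurable_funTS (measurable_realfun.continuous_measurable_fun cE). Qed.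

Lemma intE a : lam.-integrable `[a, +oo[ (EFin \o E).
Proof.
apply/integrableP; split; first by apply/measurable_EFinP; exact: mE.
under eq_integral => x _ do rewrite /comp abse_EFin ger0_norm ?expR_ge0//.
by rewrite intE_full ltry.
Qed.

Lemma RintE a : \int[lam]_(x in `[a, +oo[) E x = E a / r.
Proof. by rewrite /Rintegral intE_full. Qed.

Lemma intEo a : lam.-integrable `]a, +oo[ (EFin \o E).
Proof.
apply: integrableS (intE a) => //.
by apply: subset_itvr; rewrite bnd_simp.
Qed.

Lemma RintEo a : \int[lam]_(x in `]a, +oo[) E x = E a / r.
Proof. by rewrite Rintegral_itv_obnd_cbnd ?RintE// intEo. Qed.

Lemma intEt (A : set R) : measurable A -> A `<=` `[t, +oo[ ->
  lam.-integrable A (EFin \o E).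
Proof. by move=> mA At; apply: integrableS (intE t). Qed.

Variables (F : R -> R) (M k a C : R).
Hypothesis mF : measurable_fun `[t, +oo[ F.
Hypothesis F0 : forall u, t <= u -> 0 <= F u.
Hypothesis FM : forall u, t <= u -> F u <= M.

Lemma intcE (c : R) : lam.-integrable `[t, +oo[ (EFin \o (fun u => c * E u)).
Proof.
apply: (eq_integrable _ _ _ _ (integrableZl _ c (intE t))) => //.
Qed.

Lemma intFE : lam.-integrable `[t, +oo[ (EFin \o (fun u => F u * E u)).
Proof.
apply: (le_integrable _ _ _ (intcE M)) => //.
  by apply/measurable_EFinP; apply: measurable_funM => //; exact: mE.
move=> x; rewrite /= in_itv /= andbT => tx.
have M0 : 0 <= M := le_trans (F0 _ tx) (FM _ tx).
by rewrite lee_fin !normrM ler_wpM2r// !ger0_norm ?FM ?F0.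
Qed.

Lemma intkFE : lam.-integrable `[t, +oo[ (EFin \o (fun u => (k - F u) * E u)).
Proof.
apply: (eq_integrable _ _ _ _ (integrableB _ (intcE k) intFE)) => //.
by move=> x _ /=; rewrite -EFinB mulrBl.
Qed.

Lemma intS (f : R -> R) (A : set R) : measurable A -> A `<=` `[t, +oo[ ->
  lam.-integrable `[t, +oo[ (EFin \o f) -> lam.-integrable A (EFin \o f).
Proof. by move=> mA At fi; apply: integrableS fi. Qed.

Lemma sub_o x : t <= x -> `]x, +oo[ `<=` `[t, +oo[.
Proof.
move=> tx; apply: subset_itvr; rewrite bnd_simp //.
Qed.

Lemma sub_oc x y : t <= x -> `]x, y] `<=` `[t, +oo[.
Proof.
move=> tx u; rewrite /= !in_itv /= andbT => /andP[xu _].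
exact: le_trans tx (ltW xu).
Qed.

Lemma sub_cc x : `[t, x] `<=` `[t, +oo[.
Proof. by move=> u; rewrite /= !in_itv /= andbT => /andP[]. Qed.

Definition phi x := \int[lam]_(u in `]x, +oo[) ((k - F u) * E u).

Lemma phiE x : t <= x ->
  phi x = k * (E x / r) - \int[lam]_(u in `]x, +oo[) (F u * E u).
Proof.
move=> tx; rewrite /phi.
under eq_Rintegral do rewrite mulrBl.
rewrite RintegralB //; last 2 first.
- by apply: intS (intcE k) => //; exact: sub_o.
- by apply: intS intFE => //; exact: sub_o.
rewrite RintegralZl //; first by rewrite RintEo.
exact: intEo.
Qed.

Hypothesis akC : a * k = r * C.

Lemma gE x : t <= x ->
  C * E x + a * \int[lam]_(u in `[t, x]) (F u * E u) =
  a * \int[lam]_(u in `[t, +oo[) (F u * E u) + a * phi x.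
Proof.
move=> tx.
have := @Rintegral_itvB R (fun u => F u * E u) (BLeft t) (BInfty _ false) x intFE.
rewrite !bnd_simp => /(_ tx isT) => h.
rewrite phiE // -h.
set I1 := \int[lam]_(u in `[t, +oo[) _.
set I2 := \int[lam]_(u in `[t, x]) _.
rewrite (_ : a * (k * (E x / r) - (I1 - I2)) = (a * k) * (E x / r) - a * I1 + a * I2); last by ring.
rewrite akC.
by field; rewrite gt_eqF.
Qed.

Lemma phi_diff x y : t <= x -> x <= y ->
  phi x - phi y = \int[lam]_(u in `]x, y]) ((k - F u) * E u).
Proof.
move=> tx xy.
have := @Rintegral_itvB R (fun u => (k - F u) * E u) (BRight x) (BInfty _ false) y.
rewrite !bnd_simp => /(_ _ xy isT) h.
rewrite /phi -h; first by rewrite opprB addrC subrK.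
by apply: intS intkFE => //; exact: sub_o.
Qed.

Lemma int_ge0 x y : t <= x -> (forall u, x < u <= y -> F u <= k) ->
  0 <= \int[lam]_(u in `]x, y]) ((k - F u) * E u).
Proof.
move=> tx h; apply: Rintegral_ge0 => u; rewrite /= in_itv /= => xuy.
by rewrite mulr_ge0 ?expR_ge0// subr_ge0 h.
Qed.

Lemma int_le0 x y : t <= x -> (forall u, x < u <= y -> k <= F u) ->
  \int[lam]_(u in `]x, y]) ((k - F u) * E u) <= 0.
Proof.
move=> tx h.
have -> : 0 = \int[lam]_(u in `]x, y]) (0 : R).
  by rewrite Rintegral_cst // mul0r.
apply: le_Rintegral => //.
- by apply: intS intkFE => //; exact: sub_oc.
- exact: (eq_integrable _ _ _ _ (integrable0 _ _)).
move=> u; rewrite /= in_itv /= => xuy.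
by rewrite mulr_le0_ge0 ?expR_ge0// subr_le0 h.
Qed.

Lemma phi_ge0 x : t <= x -> (forall u, x < u -> F u <= k) -> 0 <= phi x.
Proof.
move=> tx h; apply: Rintegral_ge0 => u; rewrite /= in_itv /= andbT => xu.
by rewrite mulr_ge0 ?expR_ge0// subr_ge0 h.
Qed.

Lemma phi_le x : t <= x -> phi x <= k * (E x / r).
Proof.
move=> tx; rewrite phiE // lerBlDr lerDl.
apply: Rintegral_ge0 => u; rewrite /= in_itv /= andbT => xu.
by rewrite mulr_ge0 ?expR_ge0// F0// (le_trans tx (ltW xu)).
Qed.

Lemma pw (Dw : R -> R) th :
  lam.-integrable `[t, +oo[ (EFin \o (fun u => E u * Dw u)) -> t <= th ->
  \int[lam]_(u in `[t, th]) ((Dw u - a * F u) * E u) - C * E th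
  + \int[lam]_(u in `[th, +oo[) (E u * Dw u)
  = \int[lam]_(u in `[t, +oo[) (E u * Dw u)
    - (C * E th + a * \int[lam]_(u in `[t, th]) (F u * E u)).
Proof.
move=> iD tth.
have iFE : lam.-integrable `[t, th] (EFin \o (fun u => F u * E u)).
  by apply: intS intFE => //; exact: sub_cc.
have e1 : \int[lam]_(u in `[t, th]) ((Dw u - a * F u) * E u) =
    \int[lam]_(u in `[t, th]) (E u * Dw u) - a * \int[lam]_(u in `[t, th]) (F u * E u).
  transitivity (\int[lam]_(u in `[t, th]) (E u * Dw u - a * (F u * E u))).
    by apply: eq_Rintegral => u _; ring.
  rewrite RintegralB //; last 2 first.
  - by apply: intS iD => //; exact: sub_cc.
  - apply: (eq_integrable _ _ _ _ (integrableZl _ a iFE)) => //.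
  by rewrite RintegralZl.
have e2 : \int[lam]_(u in `[th, +oo[) (E u * Dw u) =
    \int[lam]_(u in `[t, +oo[) (E u * Dw u) - \int[lam]_(u in `[t, th]) (E u * Dw u).
  have := @Rintegral_itvB R (fun u => E u * Dw u) (BLeft t) (BInfty _ false) th iD.
  rewrite !bnd_simp => /(_ tth isT) ->.
  rewrite Rintegral_itv_obnd_cbnd //.
  by apply: intS iD => //; exact: sub_o.
rewrite e1 e2; ring.
Qed.
End S.
Section P.
Context {R : realType} {d : measure_display} {Omega : measurableType d}.
Variable P : probability Omega R.
Variables (G : set (set Omega)).
Hypothesis hG : sigma_algebra setT G.
Hypothesis GM : G `<=` measurable.

Lemma Gmeas_meas (Y : Omega -> R) : Gmeasurable G Y -> measurable_fun setT Y.
Proof. by move=> hY _ B mB; rewrite setTI; apply: GM; exact: hY. Qed.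

Lemma G_pos (Y1 Y2 : Omega -> R) : Gmeasurable G Y1 -> Gmeasurable G Y2 ->
  G [set w | 0 < Y1 w - Y2 w].
Proof.
move=> h1 h2.
pose GT := g_sigma_algebraType G.
have mGT (Y : Omega -> R) : Gmeasurable G Y -> measurable_fun (setT : set GT) (Y : GT -> R).
  move=> hY _ B mB; rewrite setTI.
  rewrite /measurable /=.
  rewrite (sigma_algebra_id hG); exact: hY.
have := measurable_funB (mGT _ h1) (mGT _ h2).
move=> /(_ measurableT `]0, +oo[%classic (measurable_itv _)).
rewrite setTI /measurable /= (sigma_algebra_id hG).
congr G; apply/seteqP; split => w /=; rewrite in_itv /= andbT //.
Qed.

Lemma cond_le (Y1 Y2 : Omega -> R) : Gmeasurable G Y1 -> Gmeasurable G Y2 ->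
  P.-integrable setT (EFin \o Y1) -> P.-integrable setT (EFin \o Y2) ->
  (forall A, G A -> (\int[P]_(x in A) (Y1 x)%:E = \int[P]_(x in A) (Y2 x)%:E)%E) ->
  {ae P, forall w, Y1 w <= Y2 w}.
Proof.
move=> h1 h2 i1 i2 hA.
set S := [set w | 0 < Y1 w - Y2 w].
have GS : G S by exact: G_pos.
have mS : measurable S := GM _ GS.
have m1 := Gmeas_meas _ h1.
have m2 := Gmeas_meas _ h2.
have mh : measurable_fun S (fun w => (Y1 w - Y2 w)%:E).
  apply/measurable_EFinP; apply: measurable_funB; exact: measurable_funTS.
have : (\int[P]_(x in S) `|(Y1 x - Y2 x)%:E| = 0)%E.
  transitivity (\int[P]_(x in S) ((Y1 x)%:E - (Y2 x)%:E))%E.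
    apply: eq_integral => x; rewrite inE /= => Sx.
    by rewrite gtr0_norm // EFinD.
  rewrite integralB_EFin //; last 2 first.
  - exact: integrableS i1.
  - exact: integrableS i2.
  by rewrite hA // subee // integrable_fin_num //; exact: integrableS i2.
move/(ae_eq_integral_abs _ mS mh) => hae.
apply: filterS hae => w hw.
rewrite leNgt; apply/negP => lt21.
have Sw : S w by rewrite /S /= subr_gt0.
by move: (hw Sw) => /= /eqP; rewrite eqe subr_eq0 => /eqP e; move: lt21; rewrite e ltxx.
Qed.

Lemma cond_uniq (Y1 Y2 : Omega -> R) : Gmeasurable G Y1 -> Gmeasurable G Y2 ->
  P.-integrable setT (EFin \o Y1) -> P.-integrable setT (EFin \o Y2) ->
  (forall A, G A -> (\int[P]_(x in A) (Y1 x)%:E = \int[P]_(x in A) (Y2 x)%:E)%E) ->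
  {ae P, forall w, Y1 w = Y2 w}.
Proof.
move=> h1 h2 i1 i2 hA.
have a1 := @cond_le Y1 Y2 h1 h2 i1 i2 hA.
have a2 : {ae P, forall w, Y2 w <= Y1 w}.
  by apply: cond_le => // A GA; rewrite hA.
apply: filterS2 a1 a2 => w l1 l2; by apply/eqP; rewrite eq_le l1 l2.
Qed.

Lemma final (Cv Z : Omega -> R) (Y : R -> Omega -> R) (t m : R) (g : R -> R)
    (s : nat -> R) :
  measurable_fun setT Cv ->
  is_ess_sup P [set th | t <= th] Y Z ->
  (forall th, t <= th -> {ae P, forall w, Y th w = Cv w - g th}) ->
  (forall th, t <= th -> m <= g th) ->
  (forall n, t <= s n) ->
  (forall e, 0 < e -> exists n, g (s n) <= m + e) ->
  {ae P, forall w, Z w = Cv w - m}.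
Proof.
move=> mCv [mZ [Zub Zleast]] hY hm hs happ.
have up : {ae P, forall w, Z w <= Cv w - m}.
  apply: Zleast.
    by apply: measurable_funB => //; exact: measurable_cst.
  move=> i ti; apply: filterS (hY i ti) => w ->.
  by rewrite lerB// hm.
have low : {ae P, forall w, forall n, Cv w - g (s n) <= Z w}.
  apply: ae_foralln => n.
  apply: filterS2 (hY _ (hs n)) (Zub _ (hs n)) => w <-; done.
apply: filterS2 up low => w h1 h2.
apply/eqP; rewrite eq_le h1 /=.
apply/ler_addgt0Pr => e e0.
have [n hn] := happ e e0.
have := h2 n; lra.
Qed.

Lemma Gmeas_comp (Y : Omega -> R) (phi : R -> R) : Gmeasurable G Y ->
  measurable_fun setT phi -> Gmeasurable G (phi \o Y).
Proof.
move=> hY mphi B mB.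
have := mphi measurableT B mB; rewrite setTI => h.
by rewrite comp_preimage; exact: hY.
Qed.

Lemma cond_shift (X Cv : Omega -> R) (g : R) :
  (forall A, G A -> (\int[P]_(x in A) (Cv x)%:E = \int[P]_(x in A) (X x)%:E)%E) ->
  P.-integrable setT (EFin \o X) -> P.-integrable setT (EFin \o Cv) ->
  forall A, G A ->
  (\int[P]_(x in A) (Cv x - g)%:E = \int[P]_(x in A) (X x - g)%:E)%E.
Proof.
move=> h iX iC A GA; have mA := GM _ GA.
have ig : P.-integrable A (EFin \o cst g) := finite_measure_integrable_cst P g mA.
rewrite (@integralB_EFin _ _ _ _ _ Cv (cst g)) //; last exact: integrableS iC.
rewrite (@integralB_EFin _ _ _ _ _ X (cst g)) //; last exact: integrableS iX.
by rewrite h.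
Qed.
End P.

Section Small.
Context {R : realType}.
Lemma small_exp (r C e : R) : 0 < r -> 0 < C -> 0 < e ->
  exists n : nat, C * expR (- r * n%:R) <= e.
Proof.
move=> r0 C0 e0.
exists (Num.Def.trunc (C / (r * e))).+1.
set n := (Num.Def.trunc (C / (r * e))).+1.
have hn : C / (r * e) < n%:R := truncnS_gt _.
have hX := expR_ge1Dx (r * n%:R).
have X0 := expR_gt0 (r * n%:R).
have hC : C < n%:R * (r * e).
  by rewrite -ltr_pdivrMr // mulr_gt0.
rewrite mulNr expRN ler_pdivrMr //.
have n0 : 0 <= n%:R :> R by [].
nra.
Qed.
End Small.

Theorem theorem1 (R : realType) (d : measure_display) (Omega : measurableType d)
  (P : probability Omega R) (U : R -> set (set Omega)) (D : R -> Omega -> R)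
  (Rs rbar alpha alphas : R) (c : R -> R -> R) (f delta : R -> R) :
  is_filtration U ->
  (forall t, 0 <= t -> Gmeasurable (U t) (D t)) ->
  (forall w, {within `[0, +oo[, continuous (fun u => D u w)}) ->
  (* well-definedness / finiteness of the quantities involved *)
  (forall w, lebesgue_measure.-integrable `[0, +oo[
                (fun u => (expR (- rbar * u) * D u w)%:E)) ->
  (forall t, 0 <= t -> P.-integrable setT
     (fun w => (\int[lebesgue_measure]_(u in `[t, +oo[)
                  (expR (- rbar * (u - t)) * D u w))%:E)) ->
  0 < Rs -> 0 < rbar -> 0 < alphas -> alphas < alpha ->
  {within [set p : R * R | 0 <= p.1 /\ 0 <= p.2], continuous (fun p : R * R => c p.1 p.2)} ->
  (forall x y, 0 <= x -> 0 <= y -> 0 < c x y) ->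
  (forall x, 0 <= x -> 0 < f x) ->
  differentiable_Rplus f ->
  (forall x, 0 <= x -> 0 <= delta x) ->
  C1_Rplus delta ->
  (exists t0 ts, 0 <= t0 /\ t0 < ts /\
     (forall u, 0 <= u <= t0 -> delta u = delta 0) /\
     (forall u, ts <= u -> delta u = delta ts)) ->
  (* (1) and (2) *)
  {in `[0, +oo[ &, {homo delta : x y / x <= y}} ->
  {in `[0, +oo[ &, {homo f : x y / x <= y}} ->
  forall t : R, 0 <= t ->
  forall Cv : Omega -> R,
    is_cond_exp P (U t)
      (fun w => \int[lebesgue_measure]_(u in `[t, +oo[) (expR (- rbar * (u - t)) * D u w))
      Cv ->
  forall Y : R -> Omega -> R,
    (forall th, t <= th -> is_cond_exp P (U t)
      (fun w =>
         \int[lebesgue_measure]_(u in `[t, th])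
            ((D u w - (alpha - alphas) * f (delta u)) * expR (- rbar * (u - t)))
         - c alpha alphas * expR (- rbar * (th - t))
         + \int[lebesgue_measure]_(u in `[th, +oo[) (expR (- rbar * (u - t)) * D u w))
      (Y th)) ->
  forall Z : Omega -> R, is_ess_sup P [set th | t <= th] Y Z ->
  forall T : \bar R, opt_date f delta rbar (c alpha alphas) alpha alphas t T ->
  {ae P, forall w, Rs * Z w = Rs * Cv w - Rs * Xcost f delta rbar (c alpha alphas) alpha alphas t T}.
Proof.
move=> Hfilt HDm HDc HDi HXi HRs Hr Has Haa Hcc Hcpos Hfpos Hfd Hdpos Hd1 Hdconst
  Hdm Hfm t ht Cv HCv Y HY Z HZ T HT.
have [t0 [ts [t00 [t0ts [Hd0 Hdts]]]]] := Hdconst.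
have ts0 : 0 <= ts := le_trans t00 (ltW t0ts).
pose a := alpha - alphas.
have a0 : 0 < a by rewrite subr_gt0.
pose C := c alpha alphas.
have C0 : 0 < C.
  by apply: Hcpos; [exact: le_trans (ltW Has) (ltW Haa) | exact: ltW].
pose k := rbar * C / a.
have akC : a * k = rbar * C by rewrite /k; field; rewrite gt_eqF.
pose F := fun u => f (delta u).
have Fmono x y : 0 <= x -> x <= y -> F x <= F y.
  move=> x0 xy; rewrite /F; apply: Hfm.
  - by rewrite in_itv /= andbT Hdpos.
  - by rewrite in_itv /= andbT Hdpos // (le_trans x0 xy).
  apply: Hdm => //.
  - by rewrite in_itv /= andbT.
  - by rewrite in_itv /= andbT (le_trans x0 xy).
have F0 u : 0 <= u -> 0 <= F u by move=> u0; exact/ltW/Hfpos/Hdpos.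
have FM u : 0 <= u -> F u <= F ts.
  move=> u0; have [uts|tsu] := leP u ts; first exact: Fmono.
  by rewrite /F Hdts // ltW.
have F0t u : t <= u -> 0 <= F u by move=> tu; apply: F0; exact: le_trans ht tu.
have FMt u : t <= u -> F u <= F ts by move=> tu; apply: FM; exact: le_trans ht tu.
have mF : measurable_fun `[t, +oo[ F.
  pose F' := fun u => if u < 0 then F 0 else F u.
  have hF' : {homo F' : x y / x <= y}.
    move=> x y xy; rewrite /F'.
    case: ifP => x0; case: ifP => y0.
    - exact: lexx.
    - by apply: Fmono => //; rewrite leNgt y0.
    - by rewrite (le_lt_trans xy y0) in x0.
    - by apply: Fmono => //; rewrite leNgt x0.
  apply: (eq_measurable_fun F'); last exact: nondecreasing_measurable.
  move=> u; rewrite inE /= in_itv /= andbT => tu.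
  by rewrite /F' ifF // ltNge (le_trans ht tu).
have iD w : lebesgue_measure.-integrable `[t, +oo[
    (EFin \o (fun u => expR (- rbar * (u - t)) * D u w)).
  have h1 : lebesgue_measure.-integrable `[0, +oo[
      (fun u => (expR (rbar * t))%:E * (expR (- rbar * u) * D u w)%:E)%E.
    by apply: integrableZl => //; exact: HDi.
  have sub : `[t, +oo[%classic `<=` `[0, +oo[%classic.
    by apply: subset_itvr; rewrite bnd_simp.
  have h2 : lebesgue_measure.-integrable `[t, +oo[
      (fun u => (expR (rbar * t))%:E * (expR (- rbar * u) * D u w)%:E)%E.
    by apply: integrableS h1.
  apply: (eq_integrable _ _ _ _ h2) => //.
  move=> u _ /=; rewrite -EFinM; congr EFin.
  by rewrite mulrA -expRD; congr (expR _ * _); ring.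
pose g := fun th => C * expR (- rbar * (th - t)) +
  a * \int[lebesgue_measure]_(u in `[t, th]) (F u * expR (- rbar * (u - t))).
have hYae th : t <= th -> {ae P, forall w, Y th w = Cv w - g th}.
  move=> tth.
  have [hYm [hYi hYA]] := HY th tth.
  have [hCm [hCi hCA]] := HCv.
  have hG := Hfilt.1 t ht.
  have GM := Hfilt.2.1 t ht.
  apply: (@cond_uniq _ _ _ P (U t) hG GM) => //.
  - apply: (@Gmeas_comp _ _ _ (U t) Cv (fun x => x - g th)) => //.
    by apply: measurable_funB => //; exact: measurable_cst.
  - apply: (eq_integrable _ _ _ _ (integrableB _ hCi (finite_measure_integrable_cst P (g th) measurableT))) => //.
  - move=> A GA; rewrite hYA //.
    transitivity (\int[P]_(x in A)
        ((\int[lebesgue_measure]_(u in `[t, +oo[) (expR (- rbar * (u - t)) * D u x)) - g th)%:E)%E.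
      apply: eq_integral => w _; congr EFin.
      exact: (pw rbar t Hr F (F ts) a C mF F0t FMt (fun u => D u w) th (iD w) tth).
    by symmetry; apply: (@cond_shift _ _ _ P (U t) GM) => //; exact: HXi.
have mCv : measurable_fun setT Cv := @Gmeas_meas _ _ _ (U t) (Hfilt.2.1 t ht) _ HCv.1.
pose IF := \int[lebesgue_measure]_(u in `[t, +oo[) (F u * expR (- rbar * (u - t))).
pose ph := phi rbar t F k.
have hgE x : t <= x -> g x = a * IF + a * ph x.
  by move=> tx; exact: (gE rbar t Hr F (F ts) k a C mF F0t FMt akC x tx).
move: HT; rewrite /opt_date /=.
case=> [[-> hpos]|[[-> hneg]|[ths [-> [tths [hk _]]]]]].
- have hf : {ae P, forall w, Z w = Cv w - g t}.
    apply: (@final _ _ _ P Cv Z Y t (g t) g (fun _ => t) mCv HZ hYae).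
  + move=> th tth; rewrite !hgE // lerD2l ler_pM2l // -subr_le0.
    rewrite (phi_diff rbar t Hr F (F ts) k mF F0t FMt t th (lexx t) tth).
    apply: (int_le0 rbar t Hr F (F ts) k mF F0t FMt t th (lexx t)).
    move=> u /andP[tu _]; have := hpos u (ltW tu); rewrite subr_gt0 => /ltW //.
  + by move=> n.
  + by move=> e e0; exists 0%N; rewrite lerDl ltW.
  apply: filterS hf => w ->; rewrite /g /a /C /F /=; ring.
- have hf : {ae P, forall w, Z w = Cv w - a * IF}.
    apply: (@final _ _ _ P Cv Z Y t (a * IF) g (fun n => t + n%:R) mCv HZ hYae).
    + move=> th tth; rewrite hgE // lerDl; apply: mulr_ge0; first exact: ltW.
      apply: (phi_ge0 rbar t F k th tth) => u thu.
      have := hneg u (le_trans tth (ltW thu)); rewrite subr_lt0 => /ltW //.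
    + by move=> n; rewrite lerDl.
    + move=> e e0; have [n hn] := @small_exp _ rbar C e Hr C0 e0.
      have tn : t <= t + n%:R by rewrite lerDl.
      exists n; rewrite hgE // lerD2l.
      have hp := phi_le rbar t Hr F (F ts) k mF F0t FMt (t + n%:R) tn.
      apply: (@le_trans _ _ (a * (k * (expR (- rbar * (t + n%:R - t)) / rbar)))).
        by rewrite ler_pM2l //; exact: hp.
      rewrite mulrA akC (_ : t + n%:R - t = n%:R); last by ring.
      rewrite (_ : rbar * C * (expR (- rbar * n%:R) / rbar) = C * expR (- rbar * n%:R)) //.
      by field; rewrite gt_eqF.
  apply: filterS hf => w ->; rewrite /= /IF /a /F; ring.
- have hf : {ae P, forall w, Z w = Cv w - g ths}.
    apply: (@final _ _ _ P Cv Z Y t (g ths) g (fun _ => ths) mCv HZ hYae).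
    + move=> th tth; rewrite !hgE // lerD2l ler_pM2l //.
      have [thths|ththsn] := leP th ths.
      * rewrite -subr_ge0 (phi_diff rbar t Hr F (F ts) k mF F0t FMt th ths tth thths).
        apply: (int_ge0 rbar t F k th ths tth) => u /andP[thu uths].
        apply: le_trans (Fmono u ths _ uths) _.
          exact: le_trans ht (le_trans tth (ltW thu)).
        by rewrite /F hk.
      * rewrite -subr_le0 (phi_diff rbar t Hr F (F ts) k mF F0t FMt ths th tths (ltW ththsn)).
        apply: (int_le0 rbar t Hr F (F ts) k mF F0t FMt ths th tths) => u /andP[thsu _].
        apply: le_trans (Fmono ths u _ (ltW thsu)).
          by rewrite /F hk.
        exact: le_trans ht tths.
    + by move=> n.
    + by move=> e e0; exists 0%N; rewrite lerDl ltW.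
  apply: filterS hf => w ->; rewrite /g /a /C /F /=; ring.
Qed.
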